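(* Let $(\boldsymbol{x}^1,\boldsymbol{x}^2)\in(\mathbb{T}^3\times\mathbb{T}^3)\setminus\Delta$ and, for $\omega_1,\omega_2,\dots\in\Omega_0$, set $\boldsymbol{x}^j_0=\boldsymbol{x}^j$, $\boldsymbol{x}^j_n=f_{\omega_n}(\boldsymbol{x}^j_{n-1})=(x^j_n,y^j_n,z^j_n)$ for $j=1,2$. Then for any $\varepsilon>0$ there exist $N_1\in\mathbb{N}$ and $(\omega_1,\dots,\omega_{N_1})\in\Omega_0^{N_1}$ such that $x^1_{N_1}=x^2_{N_1}$, $y^1_{N_1}=y^2_{N_1}$ and $|z^1_{N_1}-z^2_{N_1}|<\varepsilon$. In particular $\mathrm{dist}_{\mathbb{T}^3}(\boldsymbol{x}^1_{N_1},\boldsymbol{x}^2_{N_1})<\varepsilon$.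
   Context: $\mathbb{T}^3=\mathbb{R}^3/(2\pi\mathbb{Z})^3$ with points $\boldsymbol{x}=(x,y,z)$ and its standard flat distance $\mathrm{dist}_{\mathbb{T}^3}$; $\Delta=\{(\boldsymbol{x}^1,\boldsymbol{x}^2):\boldsymbol{x}^1=\boldsymbol{x}^2\}$. Fix $U>0$ and let $\Omega_0=[-U,U]^3\times[0,2\pi)^3$, with elements $\omega=(\mathsf{A},\mathsf{B},\mathsf{C},\alpha,\beta,\gamma)$. Define maps of $\mathbb{T}^3$: $f_{(\mathsf{A},\alpha)}(x,y,z)=(x+\mathsf{A}\sin(z+\alpha),\ y+\mathsf{A}\cos(z+\alpha),\ z)$, $f_{(\mathsf{B},\beta)}(x,y,z)=(x,\ y+\mathsf{B}\sin(x+\beta),\ z+\mathsf{B}\cos(x+\beta))$, $f_{(\mathsf{C},\gamma)}(x,y,z)=(x+\mathsf{C}\cos(y+\gamma),\ y,\ z+\mathsf{C}\sin(y+\gamma))$, and $f_\omega=f_{(\mathsf{C},\gamma)}\circ f_{(\mathsf{B},\beta)}\circ f_{(\mathsf{A},\alpha)}$. *)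

(* Defs.v *)
From Stdlib Require Import Reals Lra ZArith List.
Open Scope R_scope.

(* Points of T^3 = R^3/(2 pi Z)^3 are represented by representatives in R^3. *)
Definition pt := (R * R * R)%type.

Definition eqmod2pi (a b : R) : Prop := exists k : Z, a - b = 2 * PI * IZR k.

Definition eqT3 (p q : pt) : Prop :=
  match p, q with
  | (x1, y1, z1), (x2, y2, z2) => eqmod2pi x1 x2 /\ eqmod2pi y1 y2 /\ eqmod2pi z1 z2
  end.

(* Flat distance on the circle R/2piZ: min_k |a - b - 2 pi k|. *)
Definition distS1 (a b : R) : R :=
  let d := a - b in
  let r := d - 2 * PI * IZR (Int_part (d / (2 * PI))) in   (* r in [0, 2pi) *)
  Rmin r (2 * PI - r).

Definition distT3 (p q : pt) : R :=
  match p, q with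
  | (x1, y1, z1), (x2, y2, z2) =>
      sqrt (distS1 x1 x2 ^ 2 + distS1 y1 y2 ^ 2 + distS1 z1 z2 ^ 2)
  end.

Record omega := mkOmega { oA : R; oB : R; oC : R; oal : R; obe : R; oga : R }.

Definition inOmega0 (U : R) (w : omega) : Prop :=
  -U <= oA w <= U /\ -U <= oB w <= U /\ -U <= oC w <= U /\
  0 <= oal w < 2 * PI /\ 0 <= obe w < 2 * PI /\ 0 <= oga w < 2 * PI.

Definition fA (A al : R) (p : pt) : pt :=
  let '(x, y, z) := p in (x + A * sin (z + al), y + A * cos (z + al), z).
Definition fB (B be : R) (p : pt) : pt :=
  let '(x, y, z) := p in (x, y + B * sin (x + be), z + B * cos (x + be)).
Definition fC (C ga : R) (p : pt) : pt :=
  let '(x, y, z) := p in (x + C * cos (y + ga), y, z + C * sin (y + ga)).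

Definition f_omega (w : omega) (p : pt) : pt :=
  fC (oC w) (oga w) (fB (oB w) (obe w) (fA (oA w) (oal w) p)).

Definition orbit (ws : list omega) (p : pt) : pt :=
  fold_left (fun q w => f_omega w q) ws p.

(* Main.v *)
Require Import Defs.
From Stdlib Require Import Reals Lra Lia List ZArith Classical.
Open Scope R_scope.

Lemma per_sincos (x : R) (k : Z) :
  sin (x + 2 * IZR k * PI) = sin x /\ cos (x + 2 * IZR k * PI) = cos x.
Proof.
  destruct k as [|p|p].
  - simpl. replace (x + 2 * 0 * PI) with x by ring. auto.
  - rewrite <- (positive_nat_Z p), <- INR_IZR_INZ. split; [apply sin_period|apply cos_period].
  - rewrite IZR_NEG, <- (positive_nat_Z p), <- INR_IZR_INZ.
    set (q := INR (Pos.to_nat p)).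
    pose proof (sin_period (x + 2 * - q * PI) (Pos.to_nat p)) as H1.
    pose proof (cos_period (x + 2 * - q * PI) (Pos.to_nat p)) as H2.
    fold q in H1, H2.
    replace (x + 2 * - q * PI + 2 * q * PI) with x in H1, H2 by ring.
    split; symmetry; assumption.
Qed.

Lemma reduce (a : R) : exists phi, 0 <= phi < 2 * PI /\
  forall t, sin (t + phi) = sin (t + a) /\ cos (t + phi) = cos (t + a).
Proof.
  pose proof PI_RGT_0 as HP.
  set (q := a / (2 * PI)).
  assert (Ha : a = 2 * PI * q) by (unfold q; field; lra).
  destruct (base_Int_part q) as [H1 H2].
  set (k := Int_part q) in *.
  exists (a - 2 * PI * IZR k). split.
  - assert (2 * PI * IZR k <= 2 * PI * q) by (apply Rmult_le_compat_l; lra).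
    assert (2 * PI * q < 2 * PI * (IZR k + 1)) by (apply Rmult_lt_compat_l; lra).
    lra.
  - intro t. destruct (per_sincos (t + (a - 2 * PI * IZR k)) k) as [E1 E2].
    replace (t + (a - 2 * PI * IZR k) + 2 * IZR k * PI) with (t + a) in E1, E2 by ring.
    split; symmetry; assumption.
Qed.

Lemma sin_ne (a b : R) : ~ eqmod2pi a b -> sin ((a - b) / 2) <> 0.
Proof.
  intros H E. apply H. destruct (sin_eq_0_0 _ E) as [k Hk].
  exists k. lra.
Qed.

Lemma nat_gt (r : R) : 0 <= r -> exists n : nat, r < INR n /\ (0 < n)%nat.
Proof.
  intro Hr. destruct (archimed r) as [H1 _].
  assert (Hu : (0 < up r)%Z) by (apply lt_IZR; lra).
  exists (Z.to_nat (up r)). rewrite INR_IZR_INZ, Z2Nat.id by lia. split; [lra|lia].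
Qed.

Lemma core (U : R) (HU : 0 < U) (D T : R) : D <> 0 ->
  exists (n : nat) (a : R), -U <= a <= U /\ INR n * a * D = T.
Proof.
  intro HD.
  assert (HaD : 0 < Rabs D) by (apply Rabs_pos_lt; auto).
  destruct (nat_gt (Rabs T / (U * Rabs D))) as [n [Hn Hn0]].
  { unfold Rdiv; apply Rmult_le_pos; [apply Rabs_pos| left; apply Rinv_0_lt_compat; nra]. }
  assert (HnR : 0 < INR n) by (apply lt_0_INR; auto).
  exists n, (T / (INR n * D)). split.
  - set (a := T / (INR n * D)).
    set (K := INR n * D).
    assert (HK : a * K = T) by (unfold a, K; field; split; lra).
    assert (HKa : Rabs K = INR n * Rabs D) by (unfold K; rewrite Rabs_mult, (Rabs_pos_eq (INR n)); lra).
    assert (Hlt : Rabs T < U * Rabs K).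
    { rewrite HKa.
      assert (Rabs T / (U * Rabs D) * (U * Rabs D) < INR n * (U * Rabs D)) by (apply Rmult_lt_compat_r; nra).
      replace (Rabs T / (U * Rabs D) * (U * Rabs D)) with (Rabs T) in H by (field; lra).
      nra. }
    assert (Habs : Rabs a * Rabs K = Rabs T) by (rewrite <- Rabs_mult, HK; auto).
    assert (Rabs a < U).
    { apply (Rmult_lt_reg_r (Rabs K)); [rewrite HKa; nra | lra]. }
    destruct (Rabs_def2 _ _ H). lra.
  - field. split; lra.
Qed.

Lemma steer_sin (U : R) (HU : 0 < U) (t1 t2 T : R) : sin ((t1 - t2) / 2) <> 0 ->
  exists (n : nat) (a phi : R), -U <= a <= U /\ 0 <= phi < 2 * PI /\
    INR n * (a * sin (t1 + phi)) - INR n * (a * sin (t2 + phi)) = T /\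
    cos (t1 + phi) = cos (t2 + phi).
Proof.
  intro Hs. set (h := (t1 - t2) / 2).
  destruct (reduce (- ((t1 + t2) / 2))) as [phi [Hphi Hp]].
  destruct (Hp t1) as [S1 C1]. destruct (Hp t2) as [S2 C2].
  replace (t1 + - ((t1 + t2) / 2)) with h in S1, C1 by (unfold h; field).
  replace (t2 + - ((t1 + t2) / 2)) with (- h) in S2, C2 by (unfold h; field).
  rewrite sin_neg in S2. rewrite cos_neg in C2.
  destruct (core U HU (2 * sin h) T) as [n [a [Ha Hn]]]. { fold h in Hs. lra. }
  exists n, a, phi. split; [auto|split; [auto|split]].
  - rewrite S1, S2. rewrite <- Hn. ring.
  - congruence.
Qed.

Lemma steer_cos (U : R) (HU : 0 < U) (t1 t2 T : R) : sin ((t1 - t2) / 2) <> 0 ->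
  exists (n : nat) (a phi : R), -U <= a <= U /\ 0 <= phi < 2 * PI /\
    INR n * (a * cos (t1 + phi)) - INR n * (a * cos (t2 + phi)) = T /\
    sin (t1 + phi) = sin (t2 + phi).
Proof.
  intro Hs. set (h := (t1 - t2) / 2).
  destruct (reduce (PI / 2 - ((t1 + t2) / 2))) as [phi [Hphi Hp]].
  destruct (Hp t1) as [S1 C1]. destruct (Hp t2) as [S2 C2].
  replace (t1 + (PI / 2 - (t1 + t2) / 2)) with (PI / 2 - - h) in S1, C1 by (unfold h; field).
  replace (t2 + (PI / 2 - (t1 + t2) / 2)) with (PI / 2 - h) in S2, C2 by (unfold h; field).
  rewrite sin_shift, cos_neg in S1. rewrite cos_shift, sin_neg in C1.
  rewrite sin_shift in S2. rewrite cos_shift in C2.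
  destruct (core U HU (- 2 * sin h) T) as [n [a [Ha Hn]]]. { fold h in Hs. lra. }
  exists n, a, phi. split; [auto|split; [auto|split]].
  - rewrite C1, C2. rewrite <- Hn. ring.
  - congruence.
Qed.

Definition wA a phi := mkOmega a 0 0 phi 0 0.
Definition wB b phi := mkOmega 0 b 0 0 phi 0.
Definition wC c phi := mkOmega 0 0 c 0 0 phi.

Lemma orbit_cons w ws p : orbit (w :: ws) p = orbit ws (f_omega w p).
Proof. reflexivity. Qed.

Lemma orbit_app l1 l2 p : orbit (l1 ++ l2) p = orbit l2 (orbit l1 p).
Proof. unfold orbit. apply fold_left_app. Qed.

Lemma orbitA n a phi x y z : orbit (repeat (wA a phi) n) (x, y, z) =
  (x + INR n * (a * sin (z + phi)), y + INR n * (a * cos (z + phi)), z).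
Proof.
  revert x y z. induction n as [|n IH]; intros x y z.
  - simpl. unfold orbit; simpl. match goal with |- (?a,?b,?c) = (?d,?e,?f) => replace d with a by ring; replace e with b by ring; replace f with c by ring; reflexivity end.
  - rewrite S_INR. simpl repeat. rewrite orbit_cons.
    unfold f_omega, wA; cbn [fA fB fC oA oB oC oal obe oga]. rewrite !Rmult_0_l, !Rplus_0_r.
    rewrite IH. match goal with |- (?a,?b,?c) = (?d,?e,?f) => replace d with a by ring; replace e with b by ring; replace f with c by ring; reflexivity end.
Qed.

Lemma orbitB n b phi x y z : orbit (repeat (wB b phi) n) (x, y, z) =
  (x, y + INR n * (b * sin (x + phi)), z + INR n * (b * cos (x + phi))).
Proof.
  revert x y z. induction n as [|n IH]; intros x y z.
  - simpl. unfold orbit; simpl. match goal with |- (?a,?b,?c) = (?d,?e,?f) => replace d with a by ring; replace e with b by ring; replace f with c by ring; reflexivity end.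
  - rewrite S_INR. simpl repeat. rewrite orbit_cons.
    unfold f_omega, wB; cbn [fA fB fC oA oB oC oal obe oga]. rewrite !Rmult_0_l, !Rplus_0_r.
    rewrite IH. match goal with |- (?a,?b,?c) = (?d,?e,?f) => replace d with a by ring; replace e with b by ring; replace f with c by ring; reflexivity end.
Qed.

Lemma orbitC n c phi x y z : orbit (repeat (wC c phi) n) (x, y, z) =
  (x + INR n * (c * cos (y + phi)), y, z + INR n * (c * sin (y + phi))).
Proof.
  revert x y z. induction n as [|n IH]; intros x y z.
  - simpl. unfold orbit; simpl. match goal with |- (?a,?b,?c) = (?d,?e,?f) => replace d with a by ring; replace e with b by ring; replace f with c by ring; reflexivity end.
  - rewrite S_INR. simpl repeat. rewrite orbit_cons.
    unfold f_omega, wC; cbn [fA fB fC oA oB oC oal obe oga]. rewrite !Rmult_0_l, !Rplus_0_r.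
    rewrite IH. match goal with |- (?a,?b,?c) = (?d,?e,?f) => replace d with a by ring; replace e with b by ring; replace f with c by ring; reflexivity end.
Qed.

Lemma Forall_repeat {A} (P : A -> Prop) x n : P x -> Forall P (repeat x n).
Proof. intro H. induction n; simpl; constructor; auto. Qed.

Lemma inA U a phi : 0 < U -> -U <= a <= U -> 0 <= phi < 2 * PI -> inOmega0 U (wA a phi).
Proof. pose proof PI_RGT_0. unfold inOmega0, wA; simpl; intros; repeat split; lra. Qed.
Lemma inB U a phi : 0 < U -> -U <= a <= U -> 0 <= phi < 2 * PI -> inOmega0 U (wB a phi).
Proof. pose proof PI_RGT_0. unfold inOmega0, wB; simpl; intros; repeat split; lra. Qed.
Lemma inC U a phi : 0 < U -> -U <= a <= U -> 0 <= phi < 2 * PI -> inOmega0 U (wC a phi).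
Proof. pose proof PI_RGT_0. unfold inOmega0, wC; simpl; intros; repeat split; lra. Qed.

Section S.
Variable U : R.
Hypothesis HU : 0 < U.

Lemma moveA_x x1 y1 z1 x2 y2 z2 T : sin ((z1 - z2) / 2) <> 0 ->
  exists ws, Forall (inOmega0 U) ws /\ exists x1' y1' x2' y2',
    orbit ws (x1, y1, z1) = (x1', y1', z1) /\ orbit ws (x2, y2, z2) = (x2', y2', z2) /\
    x1' - x2' = x1 - x2 + T /\ y1' - y2' = y1 - y2.
Proof.
  intro Hs. destruct (steer_sin U HU z1 z2 T Hs) as [n [a [phi [Ha [Hp [Hn Hc]]]]]].
  exists (repeat (wA a phi) n). split. { apply Forall_repeat, inA; auto. }
  rewrite !orbitA. do 4 eexists. split; [reflexivity|split; [reflexivity|split]].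
  - lra.
  - rewrite Hc. ring.
Qed.

Lemma moveA_y x1 y1 z1 x2 y2 z2 T : sin ((z1 - z2) / 2) <> 0 ->
  exists ws, Forall (inOmega0 U) ws /\ exists x1' y1' x2' y2',
    orbit ws (x1, y1, z1) = (x1', y1', z1) /\ orbit ws (x2, y2, z2) = (x2', y2', z2) /\
    x1' - x2' = x1 - x2 /\ y1' - y2' = y1 - y2 + T.
Proof.
  intro Hs. destruct (steer_cos U HU z1 z2 T Hs) as [n [a [phi [Ha [Hp [Hn Hc]]]]]].
  exists (repeat (wA a phi) n). split. { apply Forall_repeat, inA; auto. }
  rewrite !orbitA. do 4 eexists. split; [reflexivity|split; [reflexivity|split]].
  - rewrite Hc. ring.
  - lra.
Qed.

Lemma moveB_z x1 y1 z1 x2 y2 z2 T : sin ((x1 - x2) / 2) <> 0 ->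
  exists ws, Forall (inOmega0 U) ws /\ exists y1' z1' y2' z2',
    orbit ws (x1, y1, z1) = (x1, y1', z1') /\ orbit ws (x2, y2, z2) = (x2, y2', z2') /\
    z1' - z2' = z1 - z2 + T.
Proof.
  intro Hs. destruct (steer_cos U HU x1 x2 T Hs) as [n [a [phi [Ha [Hp [Hn Hc]]]]]].
  exists (repeat (wB a phi) n). split. { apply Forall_repeat, inB; auto. }
  rewrite !orbitB. do 4 eexists. split; [reflexivity|split; [reflexivity|]].
  lra.
Qed.

Lemma moveC_x x1 y1 z1 x2 y2 z2 T : sin ((y1 - y2) / 2) <> 0 ->
  exists ws, Forall (inOmega0 U) ws /\ exists x1' z1' x2' z2',
    orbit ws (x1, y1, z1) = (x1', y1, z1') /\ orbit ws (x2, y2, z2) = (x2', y2, z2') /\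
    x1' - x2' = x1 - x2 + T.
Proof.
  intro Hs. destruct (steer_cos U HU y1 y2 T Hs) as [n [a [phi [Ha [Hp [Hn Hc]]]]]].
  exists (repeat (wC a phi) n). split. { apply Forall_repeat, inC; auto. }
  rewrite !orbitC. do 4 eexists. split; [reflexivity|split; [reflexivity|]].
  lra.
Qed.

Lemma sinPI2_ne a b : a - b = PI -> sin ((a - b) / 2) <> 0.
Proof. intro H. rewrite H, sin_PI2. lra. Qed.

Lemma stage1 x1 y1 z1 x2 y2 z2 : ~ eqT3 (x1, y1, z1) (x2, y2, z2) ->
  exists ws, Forall (inOmega0 U) ws /\ exists a1 b1 c1 a2 b2 c2,
    orbit ws (x1, y1, z1) = (a1, b1, c1) /\ orbit ws (x2, y2, z2) = (a2, b2, c2) /\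
    sin ((a1 - a2) / 2) <> 0.
Proof.
  intro H. simpl in H.
  destruct (classic (eqmod2pi x1 x2)) as [Hx|Hx].
  - destruct (classic (eqmod2pi z1 z2)) as [Hz|Hz].
    + assert (Hy : ~ eqmod2pi y1 y2) by tauto.
      destruct (moveC_x x1 y1 z1 x2 y2 z2 (PI - (x1 - x2)) (sin_ne _ _ Hy))
        as [ws [HF [a1 [c1 [a2 [c2 [E1 [E2 Hd]]]]]]]].
      exists ws. split; auto. exists a1, y1, c1, a2, y2, c2. repeat split; auto.
      apply sinPI2_ne. lra.
    + destruct (moveA_x x1 y1 z1 x2 y2 z2 (PI - (x1 - x2)) (sin_ne _ _ Hz))
        as [ws [HF [a1 [b1 [a2 [b2 [E1 [E2 [Hd _]]]]]]]]].
      exists ws. split; auto. exists a1, b1, z1, a2, b2, z2. repeat split; auto.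
      apply sinPI2_ne. lra.
  - exists nil. split; [constructor|]. exists x1, y1, z1, x2, y2, z2.
    repeat split; auto. apply sin_ne; auto.
Qed.

End S.

Lemma Int_part_small u : 0 <= u < 1 -> Int_part u = 0%Z.
Proof.
  intro H. destruct (base_Int_part u) as [H1 H2].
  assert (A1 : (Int_part u < 1)%Z) by (apply lt_IZR; simpl; lra).
  assert (A2 : (-1 < Int_part u)%Z) by (apply lt_IZR; simpl; lra).
  lia.
Qed.

Lemma distS1_small a b : 0 <= a - b <= 1 -> distS1 a b = a - b.
Proof.
  intro H. pose proof PI2_1. unfold distS1.
  rewrite Int_part_small.
  - simpl IZR. rewrite Rmin_left; lra.
  - split.
    + unfold Rdiv. apply Rmult_le_pos; [lra|]. left; apply Rinv_0_lt_compat; lra.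
    + apply (Rmult_lt_reg_r (2 * PI)); [lra|].
      replace ((a - b) / (2 * PI) * (2 * PI)) with (a - b) by (field; lra). lra.
Qed.

Theorem lemma3p7 (U : R) (HU : 0 < U) (p1 p2 : pt) (Hoff : ~ eqT3 p1 p2)
  (eps : R) (Heps : 0 < eps) :
  exists (N1 : nat) (ws : list omega),
    length ws = N1 /\ Forall (inOmega0 U) ws /\
    (let '(x1, y1, z1) := orbit ws p1 in
     let '(x2, y2, z2) := orbit ws p2 in
     eqmod2pi x1 x2 /\ eqmod2pi y1 y2 /\ distS1 z1 z2 < eps) /\
    distT3 (orbit ws p1) (orbit ws p2) < eps.
Proof.
  destruct p1 as [[x1 y1] z1]. destruct p2 as [[x2 y2] z2].
  pose proof PI2_1 as HPI.
  set (d := Rmin eps 1 / 2).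
  assert (Hd : 0 < d /\ d <= 1 /\ d < eps).
  { unfold d. pose proof (Rmin_l eps 1). pose proof (Rmin_r eps 1).
    assert (0 < Rmin eps 1) by (apply Rmin_glb_lt; lra). lra. }
  destruct (stage1 U HU _ _ _ _ _ _ Hoff) as [ws1 [F1 [a1 [b1 [c1 [a2 [b2 [c2 [E1 [E2 Hs1]]]]]]]]]].
  destruct (moveB_z U HU a1 b1 c1 a2 b2 c2 (d - (c1 - c2)) Hs1)
    as [ws2 [F2 [b1' [c1' [b2' [c2' [E3 [E4 Hz]]]]]]]].
  assert (Hsd : sin ((c1' - c2') / 2) <> 0).
  { replace ((c1' - c2') / 2) with (d / 2) by lra.
    assert (0 < sin (d / 2)) by (apply sin_gt_0; lra). lra. }
  destruct (moveA_y U HU a1 b1' c1' a2 b2' c2' (- (b1' - b2')) Hsd)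
    as [ws3 [F3 [a1'' [b1'' [a2'' [b2'' [E5 [E6 [Hx3 Hy3]]]]]]]]].
  destruct (moveA_x U HU a1'' b1'' c1' a2'' b2'' c2' (- (a1'' - a2'')) Hsd)
    as [ws4 [F4 [a1f [b1f [a2f [b2f [E7 [E8 [Hx4 Hy4]]]]]]]]].
  exists (length (ws1 ++ ws2 ++ ws3 ++ ws4)), (ws1 ++ ws2 ++ ws3 ++ ws4).
  split; [reflexivity|]. split.
  { repeat (apply Forall_app; split); auto. }
  rewrite !orbit_app, E1, E2, E3, E4, E5, E6, E7, E8.
  assert (Dz : distS1 c1' c2' = d) by (rewrite distS1_small; lra).
  assert (Dx : distS1 a1f a2f = 0) by (rewrite distS1_small; lra).
  assert (Dy : distS1 b1f b2f = 0) by (rewrite distS1_small; lra).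
  split.
  - split; [exists 0%Z; simpl; lra|]. split; [exists 0%Z; simpl; lra|]. lra.
  - simpl. rewrite Dx, Dy, Dz.
    replace (0 * (0 * 1) + 0 * (0 * 1) + d * (d * 1)) with (d ^ 2) by ring.
    rewrite sqrt_pow2; lra.
Qed.
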